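(* Let $\bm{B}\in\mathbb{C}^{m\times d_1}$, $\bm{A}\in\mathbb{C}^{m\times d_2}$, $\bm{y}\in\mathbb{C}^m$. The functions $F_1,F_2:\mathbb{R}^{d_1}\times\mathbb{R}^{d_2}\to\mathbb{R}$ defined by $$F_1(\bm{h},\bm{x})=\frac14\|\bm{Bh}\|_4^4+\frac14\|\bm{Ax}\|_4^4+\frac12\Big(\|\bm{Bh}\odot\bm{Ax}\|_2^2+\|\bm{y}\odot\bm{Bh}\|_2^2+\|\bm{Ax}\|_2^2+\|\bm{y}\|_2^2\Big),$$ $$F_2(\bm{h},\bm{x})=\frac14\|\bm{Bh}\|_4^4+\frac14\|\bm{Ax}\|_4^4+\frac12\|\bar{\bm{y}}\odot\bm{Bh}+\overline{\bm{Ax}}\|_2^2$$ are both convex on $\mathbb{R}^{d_1+d_2}$.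
   Context: $\odot$ is the Hadamard (elementwise) product, $\bar{\cdot}$ denotes entrywise complex conjugation, and for $\bm{w}\in\mathbb{C}^m$, $\|\bm{w}\|_2^2=\sum_j|w_j|^2$, $\|\bm{w}\|_4^4=\sum_j|w_j|^4$. The variables $\bm{h}\in\mathbb{R}^{d_1}$, $\bm{x}\in\mathbb{R}^{d_2}$ are real. *)

(* Defs.v *)
From HB Require Import structures.
From mathcomp Require Import all_boot all_order all_algebra.
From mathcomp Require Import complex.
From mathcomp Require Import reals.
Set Implicit Arguments. Unset Strict Implicit. Unset Printing Implicit Defensive.
Import Order.TTheory GRing.Theory Num.Theory.
Local Open Scope ring_scope.

Definition cabs (R : rcfType) (z : R[i]) : R := ComplexField.Normc.normc z.

Definition cvec (R : rcfType) (d : nat) (h : 'cV[R]_d) : 'cV[R[i]]_d :=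
  map_mx (fun r => r%:C%C) h.

Definition conjv (R : rcfType) (m : nat) (w : 'cV[R[i]]_m) : 'cV[R[i]]_m :=
  map_mx (@conjc R) w.

Definition hadamard (R : rcfType) (m : nat) (u v : 'cV[R[i]]_m) : 'cV[R[i]]_m :=
  \col_i (u i 0 * v i 0).

Definition norm2sq (R : rcfType) (m : nat) (w : 'cV[R[i]]_m) : R :=
  \sum_(j < m) cabs (w j 0) ^+ 2.

Definition norm4pow4 (R : rcfType) (m : nat) (w : 'cV[R[i]]_m) : R :=
  \sum_(j < m) cabs (w j 0) ^+ 4.

Definition F1 (R : rcfType) (m d1 d2 : nat) (B : 'M[R[i]]_(m, d1))
  (A : 'M[R[i]]_(m, d2)) (y : 'cV[R[i]]_m) (h : 'cV[R]_d1) (x : 'cV[R]_d2) : R :=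
  let Bh := B *m cvec h in
  let Ax := A *m cvec x in
  4^-1 * norm4pow4 Bh + 4^-1 * norm4pow4 Ax
  + 2^-1 * (norm2sq (hadamard Bh Ax) + norm2sq (hadamard y Bh)
            + norm2sq Ax + norm2sq y).

Definition F2 (R : rcfType) (m d1 d2 : nat) (B : 'M[R[i]]_(m, d1))
  (A : 'M[R[i]]_(m, d2)) (y : 'cV[R[i]]_m) (h : 'cV[R]_d1) (x : 'cV[R]_d2) : R :=
  let Bh := B *m cvec h in
  let Ax := A *m cvec x in
  4^-1 * norm4pow4 Bh + 4^-1 * norm4pow4 Ax
  + 2^-1 * norm2sq (hadamard (conjv y) Bh + conjv Ax).

(* convexity of a function on R^{d1} x R^{d2} (= R^{d1+d2}) *)
Definition convex_on_prod (R : realFieldType) (d1 d2 : nat)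
  (F : 'cV[R]_d1 -> 'cV[R]_d2 -> R) : Prop :=
  forall (h h' : 'cV[R]_d1) (x x' : 'cV[R]_d2) (t : R), 0 <= t -> t <= 1 ->
    F (t *: h + (1 - t) *: h') (t *: x + (1 - t) *: x')
      <= t * F h x + (1 - t) * F h' x'.

(* Main.v *)
Require Import Defs.
From HB Require Import structures.
From mathcomp Require Import all_boot all_order all_algebra.
From mathcomp Require Import complex.
From mathcomp Require Import reals.
From mathcomp Require Import ring lra.
Import Order.TTheory GRing.Theory Num.Theory.
Local Open Scope ring_scope.

Section Aux.
Variable R : rcfType.
Local Open Scope complex_scope.

Definition N (z : R[i]) : R := let: a +i* b := z in a ^+ 2 + b ^+ 2.

Lemma cabs2 (z : R[i]) : cabs z ^+ 2 = N z.
Proof. case: z => a b; rewrite /cabs /= sqr_sqrtr //; nra. Qed.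

Lemma cabs4 (z : R[i]) : cabs z ^+ 4 = N z ^+ 2.
Proof. by rewrite -cabs2 -exprM. Qed.

Lemma N_ge0 z : 0 <= N z.
Proof. case: z => a b /=; nra. Qed.

Lemma NM u v : N (u * v) = N u * N v.
Proof. case: u => a b; case: v => c d /=. ring. Qed.

Definition cmb (t : R) (u u' : R[i]) : R[i] := t%:C * u + (1 - t)%:C * u'.



Lemma sqconv (t a b : R) : 0 <= t -> t <= 1 ->
  (t * a + (1 - t) * b) ^+ 2 <= t * a ^+ 2 + (1 - t) * b ^+ 2.
Proof.
move=> h0 h1; rewrite -subr_ge0.
have -> : t * a ^+ 2 + (1 - t) * b ^+ 2 - (t * a + (1 - t) * b) ^+ 2 = t * (1 - t) * (a - b) ^+ 2 by ring.
apply: mulr_ge0; [apply: mulr_ge0 => //; lra | exact: sqr_ge0].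
Qed.

Lemma Nconv t u u' : 0 <= t -> t <= 1 -> N (cmb t u u') <= t * N u + (1 - t) * N u'.
Proof.
move=> h0 h1; case: u => a b; case: u' => c d /=.
idtac.
rewrite !mul0r !subr0 !addr0; have := sqconv t a c h0 h1; have := sqconv t b d h0 h1; lra.
Qed.

Lemma sq_of_conv (t P X Y : R) : 0 <= t -> t <= 1 -> 0 <= P -> 0 <= X -> 0 <= Y ->
  P <= t * X + (1 - t) * Y -> P ^+ 2 <= t * X ^+ 2 + (1 - t) * Y ^+ 2.
Proof.
move=> h0 h1 hP hX hY hle; apply: le_trans (sqconv t X Y h0 h1).
rewrite ler_pXn2r // ?nnegrE //; nra.
Qed.

Definition g1 (c u v : R[i]) : R :=
  4^-1 * cabs u ^+ 4 + 4^-1 * cabs v ^+ 4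
  + 2^-1 * (cabs (u * v) ^+ 2 + cabs (c * u) ^+ 2 + cabs v ^+ 2 + cabs c ^+ 2).

Definition g2 (c u v : R[i]) : R :=
  4^-1 * cabs u ^+ 4 + 4^-1 * cabs v ^+ 4 + 2^-1 * cabs (c^* * u + v^*) ^+ 2.

Lemma g1real (t nc nu nu2 nv nv2 a b : R) : 0 <= t -> t <= 1 ->
  0 <= nc -> 0 <= nu -> 0 <= nu2 -> 0 <= nv -> 0 <= nv2 -> 0 <= a -> 0 <= b ->
  a <= t * nu + (1 - t) * nu2 -> b <= t * nv + (1 - t) * nv2 ->
  4^-1 * a ^+ 2 + 4^-1 * b ^+ 2 + 2^-1 * (a * b + nc * a + b + nc)
  <= t * (4^-1 * nu ^+ 2 + 4^-1 * nv ^+ 2 + 2^-1 * (nu * nv + nc * nu + nv + nc))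
   + (1 - t) * (4^-1 * nu2 ^+ 2 + 4^-1 * nv2 ^+ 2 + 2^-1 * (nu2 * nv2 + nc * nu2 + nv2 + nc)).
Proof.
move=> h0 h1 gc gu gu2 gv gv2 ga gb hu hv.
have hS : a + b <= t * (nu + nv) + (1 - t) * (nu2 + nv2).
  have -> : t * (nu + nv) + (1 - t) * (nu2 + nv2) = (t * nu + (1 - t) * nu2) + (t * nv + (1 - t) * nv2) by ring.
  exact: lerD.
have hsq := sq_of_conv t _ _ _ h0 h1 (addr_ge0 ga gb) (addr_ge0 gu gv) (addr_ge0 gu2 gv2) hS.
have hc : nc * a <= nc * (t * nu + (1 - t) * nu2) by rewrite ler_wpM2l.
have e2 : forall p q : R, 4^-1 * p ^+ 2 + 4^-1 * q ^+ 2 + 2^-1 * (p * q + nc * p + q + nc)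
   = 4^-1 * (p + q) ^+ 2 + 2^-1 * (nc * p) + 2^-1 * q + 2^-1 * nc by move=> p q; field.
rewrite !e2 -subr_ge0.
have -> : t * (4^-1 * (nu + nv) ^+ 2 + 2^-1 * (nc * nu) + 2^-1 * nv + 2^-1 * nc) +
  (1 - t) * (4^-1 * (nu2 + nv2) ^+ 2 + 2^-1 * (nc * nu2) + 2^-1 * nv2 + 2^-1 * nc)
  - (4^-1 * (a + b) ^+ 2 + 2^-1 * (nc * a) + 2^-1 * b + 2^-1 * nc)
  = 4^-1 * (t * (nu + nv) ^+ 2 + (1 - t) * (nu2 + nv2) ^+ 2 - (a + b) ^+ 2)
    + 2^-1 * (nc * (t * nu + (1 - t) * nu2) - nc * a)
    + 2^-1 * (t * nv + (1 - t) * nv2 - b) by field.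
move: hsq hc hv; rewrite -[_ <= t * (nu + nv) ^+ 2 + _]subr_ge0 -[nc * a <= _]subr_ge0 -[b <= _]subr_ge0 => hsq hc hv.
by rewrite !addr_ge0 // mulr_ge0 // invr_ge0.
Qed.


Lemma g1conv t c u u2 v v2 : 0 <= t -> t <= 1 ->
  g1 c (cmb t u u2) (cmb t v v2) <= t * g1 c u v + (1 - t) * g1 c u2 v2.
Proof.
move=> h0 h1; rewrite /g1 !cabs4 !cabs2 !NM.
by apply: g1real => //; rewrite ?N_ge0 ?Nconv.
Qed.

Lemma g2real (t nu nu2 nv nv2 nw nw2 a b w : R) : 0 <= t -> t <= 1 ->
  0 <= nu -> 0 <= nu2 -> 0 <= nv -> 0 <= nv2 -> 0 <= a -> 0 <= b ->
  a <= t * nu + (1 - t) * nu2 -> b <= t * nv + (1 - t) * nv2 ->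
  w <= t * nw + (1 - t) * nw2 ->
  4^-1 * a ^+ 2 + 4^-1 * b ^+ 2 + 2^-1 * w
  <= t * (4^-1 * nu ^+ 2 + 4^-1 * nv ^+ 2 + 2^-1 * nw)
   + (1 - t) * (4^-1 * nu2 ^+ 2 + 4^-1 * nv2 ^+ 2 + 2^-1 * nw2).
Proof.
move=> h0 h1 gu gu2 gv gv2 ga gb hu hv hw.
have ha := sq_of_conv t _ _ _ h0 h1 ga gu gu2 hu.
have hb := sq_of_conv t _ _ _ h0 h1 gb gv gv2 hv.
rewrite -subr_ge0.
have -> : t * (4^-1 * nu ^+ 2 + 4^-1 * nv ^+ 2 + 2^-1 * nw)
   + (1 - t) * (4^-1 * nu2 ^+ 2 + 4^-1 * nv2 ^+ 2 + 2^-1 * nw2)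
   - (4^-1 * a ^+ 2 + 4^-1 * b ^+ 2 + 2^-1 * w)
  = 4^-1 * (t * nu ^+ 2 + (1 - t) * nu2 ^+ 2 - a ^+ 2)
    + 4^-1 * (t * nv ^+ 2 + (1 - t) * nv2 ^+ 2 - b ^+ 2)
    + 2^-1 * (t * nw + (1 - t) * nw2 - w) by field.
move: ha hb hw; rewrite -[a ^+ 2 <= _]subr_ge0 -[b ^+ 2 <= _]subr_ge0 -[w <= _]subr_ge0 => ha hb hw.
by rewrite !addr_ge0 // mulr_ge0 // invr_ge0.
Qed.

Lemma cmb_conj t c u u2 v v2 :
  c^* * cmb t u u2 + (cmb t v v2)^* = cmb t (c^* * u + v^*) (c^* * u2 + v2^*).
Proof.
case: c => c1 c2; case: u => a b; case: u2 => a2 b2; case: v => p q; case: v2 => p2 q2.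
rewrite /cmb /=; congr (_ +i* _); ring.
Qed.

Lemma g2conv t c u u2 v v2 : 0 <= t -> t <= 1 ->
  g2 c (cmb t u u2) (cmb t v v2) <= t * g2 c u v + (1 - t) * g2 c u2 v2.
Proof.
move=> h0 h1; rewrite /g2 cmb_conj !cabs4 !cabs2.
by apply: g2real => //; rewrite ?N_ge0 ?Nconv.
Qed.
End Aux.

Local Open Scope complex_scope.
Arguments cmb {R}. Arguments g1 {R}. Arguments g2 {R}. Arguments g1conv {R}. Arguments g2conv {R}.

Lemma cvec_cmb (R : rcfType) d (h h' : 'cV[R]_d) t :
  cvec (t *: h + (1 - t) *: h') = t%:C *: cvec h + (1 - t)%:C *: cvec h'.
Proof.
apply/matrixP => i j; rewrite !mxE /=.
congr (_ +i* _); ring.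
Qed.

Lemma entry_cmb (R : rcfType) m d (M : 'M[R[i]]_(m, d)) h h' t j :
  (M *m cvec (t *: h + (1 - t) *: h')) j 0 = cmb t ((M *m cvec h) j 0) ((M *m cvec h') j 0).
Proof.
rewrite cvec_cmb mulmxDr -!scalemxAr.
move: (M *m cvec h) (M *m cvec h') => X Y; by rewrite !mxE.
Qed.

Lemma F1E (R : rcfType) m d1 d2 (B : 'M[R[i]]_(m, d1)) (A : 'M[R[i]]_(m, d2)) y h x :
  F1 B A y h x = \sum_j g1 (y j 0) ((B *m cvec h) j 0) ((A *m cvec x) j 0).
Proof.
rewrite /F1 /=; move: (B *m cvec h) (A *m cvec x) => X Y.
rewrite /g1 !big_split -!mulr_sumr !big_split /= /norm4pow4 /norm2sq /hadamard.
by congr (_ + _ + _ * (_ + _ + _ + _)); apply: eq_bigr => j _; rewrite !mxE.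
Qed.

Lemma F2E (R : rcfType) m d1 d2 (B : 'M[R[i]]_(m, d1)) (A : 'M[R[i]]_(m, d2)) y h x :
  F2 B A y h x = \sum_j g2 (y j 0) ((B *m cvec h) j 0) ((A *m cvec x) j 0).
Proof.
rewrite /F2 /=; move: (B *m cvec h) (A *m cvec x) => X Y.
rewrite /g2 !big_split -!mulr_sumr /= /norm4pow4 /norm2sq /hadamard /conjv.
by congr (_ + _ + _ * _); apply: eq_bigr => j _; rewrite !mxE.
Qed.

Theorem mainTheorem3 (R : realType) (m d1 d2 : nat)
  (B : 'M[R[i]]_(m, d1)) (A : 'M[R[i]]_(m, d2)) (y : 'cV[R[i]]_m) :
  convex_on_prod (F1 B A y) /\ convex_on_prod (F2 B A y).
Proof.
split => h h' x x' t h0 h1.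
- rewrite !F1E !mulr_sumr -big_split /=; apply: ler_sum => j _.
  by rewrite !entry_cmb; apply: g1conv.
- rewrite !F2E !mulr_sumr -big_split /=; apply: ler_sum => j _.
  by rewrite !entry_cmb; apply: g2conv.
Qed.
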